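(* Let $(H,u_1u_2u_3)$ be a lucky tracker of a graph $G$ and let $S$ be a full star-cutset of $H$. Then at least one of the following holds. (B1) For each $u_1u_2u_3$-hole $C$ of $H$, there exists a connected component $B$ of $H\setminus S$ such that $C$ is a subgraph of $H[V(B)\cup S]$. (B2) There are two non-adjacent nodes $s_1,s_2$ of $S$ and two connected components $B_1,B_2$ of $H\setminus S$ with $\{s_1,s_2\}\subseteq N_H(B_1)$ and $\{s_1,s_2\}\subseteq N_H(B_2)$.
   Context: All graphs are finite, simple and undirected. For a subgraph $B$ of $H$, $N_H(B)$ is the set of nodes outside $V(B)$ adjacent to some node of $B$. A hole is an induced simple cycle with at least four nodes; it is even if it has an even number of nodes. A shortest even hole of $H$ is an even hole of $H$ with the minimum number of nodes. For a hole $C$ of $H$ and $x\in V(H)\setminus V(C)$, let $N_C(x)=N_H(x)\cap V(C)$; $x$ is a major node if $N_C(x)$ contains three distinct pairwise non-adjacent nodes; $M_H(C)$ is the set of major nodes. $N_H^{2,2}(C)$ is the set of non-major nodes $x$ adjacent to $C$ such that $C[N_C(x)]$ has exactly two connected components, each with two nodes. $C$ is clean in $H$ if $M_H(C)=N_H^{2,2}(C)=\varnothing$. A tracker of $G$ is a pair $(H,u_1u_2u_3)$ where $H$ is an induced subgraph of $G$ and $u_1u_2u_3$ is a path on three nodes of $H$. A $u_1u_2u_3$-hole of $H$ is a clean shortest even hole $C$ of $H$ such that $u_1u_2u_3$ is a path of $C$; the tracker is lucky if $H$ has a $u_1u_2u_3$-hole. A subset $S\subseteq V(H)$ is a star-cutset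 of $H$ if $S\subseteq N_H[s]$ for some $s\in S$ (closed neighborhood) and $H\setminus S$ has more connected components than $H$; it is a full star-cutset if moreover $S=N_H[s]$ for some $s\in S$. *)

(* Defs.v *)
From mathcomp Require Import all_boot.
Set Implicit Arguments. Unset Strict Implicit. Unset Printing Implicit Defensive.

(* An induced subgraph H of G is given by its vertex set VH : {set T};
   an induced subgraph is identified with its vertex set. *)

Section Graphs.
Variables (T : finType) (e : rel T).

Definition simple_graph := symmetric e /\ irreflexive e.

Definition induced_rel (A : {set T}) : rel T :=
  [rel x y | [&& e x y, x \in A & y \in A]].

Definition components (A : {set T}) : {set {set T}} :=
  [set [set y in A | connect (induced_rel A) x y] | x in A].

Definition connected_set (A : {set T}) := #|components A| == 1.

Definition nbhd_in (A : {set T}) (x : T) : {set T} := [set y in A | e x y].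

Definition closed_nbhd (VH : {set T}) (s : T) : {set T} := s |: nbhd_in VH s.

Definition nbhd_of_set (VH B : {set T}) : {set T} :=
  [set x in VH :\: B | [exists y in B, e x y]].

Definition hole (C : {set T}) :=
  [/\ 4 <= #|C|, connected_set C & forall x, x \in C -> #|nbhd_in C x| = 2].

Definition hole_of (VH C : {set T}) := C \subset VH /\ hole C.

Definition even_hole_of (VH C : {set T}) := hole_of VH C /\ ~~ odd #|C|.

Definition shortest_even_hole (VH C : {set T}) :=
  even_hole_of VH C /\ forall C', even_hole_of VH C' -> #|C| <= #|C'|.

Definition major (C : {set T}) (x : T) :=
  x \notin C /\
  exists a b c, [/\ [/\ a \in nbhd_in C x, b \in nbhd_in C x & c \in nbhd_in C x],
                    [/\ a != b, b != c & a != c] &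
                    [/\ ~~ e a b, ~~ e b c & ~~ e a c]].

Definition n22 (C : {set T}) (x : T) :=
  [/\ x \notin C, ~ major C x, nbhd_in C x != set0,
      #|components (nbhd_in C x)| = 2 &
      forall K, K \in components (nbhd_in C x) -> #|K| = 2].

Definition clean (VH C : {set T}) :=
  forall x, x \in VH -> ~ major C x /\ ~ n22 C x.

Definition path3 (VH : {set T}) (u1 u2 u3 : T) :=
  [/\ [/\ u1 \in VH, u2 \in VH & u3 \in VH],
      [/\ u1 != u2, u2 != u3 & u1 != u3] & e u1 u2 && e u2 u3].

Definition u_hole (VH : {set T}) (u1 u2 u3 : T) (C : {set T}) :=
  [/\ clean VH C, shortest_even_hole VH C & [/\ u1 \in C, u2 \in C & u3 \in C]].

Definition lucky_tracker (VH : {set T}) (u1 u2 u3 : T) :=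
  path3 VH u1 u2 u3 /\ exists C, u_hole VH u1 u2 u3 C.

Definition star_cutset (VH S : {set T}) :=
  [/\ S \subset VH, exists2 s, s \in S & S \subset closed_nbhd VH s &
      #|components VH| < #|components (VH :\: S)|].

Definition full_star_cutset (VH S : {set T}) :=
  star_cutset VH S /\ exists2 s, s \in S & S = closed_nbhd VH s.

End Graphs.

(* Main.v *)
Require Import Defs.
From mathcomp Require Import all_boot.
From mathcomp Require Import zify.
From Stdlib Require Import Classical.
Set Implicit Arguments. Unset Strict Implicit. Unset Printing Implicit Defensive.

Definition adjn (n i k : nat) : Prop :=
  k = i.+1 \/ i = k.+1 \/ (i = n.-1 /\ k = 0) \/ (k = n.-1 /\ i = 0).

Section Aux.
Variables (T : finType) (e : rel T).
Hypothesis esym : symmetric e.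
Hypothesis eirr : irreflexive e.

Lemma induced_sym (A : {set T}) : symmetric (induced_rel e A).
Proof.
move=> x y; rewrite /induced_rel /= esym.
by case: (x \in A); case: (y \in A); rewrite ?andbF ?andbT.
Qed.

Definition cls (A : {set T}) x := [set y in A | connect (induced_rel e A) x y].

Lemma cls_in_comp (A : {set T}) x : x \in A -> cls A x \in components e A.
Proof. by move=> xA; apply/imsetP; exists x. Qed.

Lemma connected_cover (C D : {set T}) x0 : connected_set e C -> x0 \in D -> D \subset C ->
  (forall x y, x \in D -> y \in C -> e x y -> y \in D) -> C \subset D.
Proof.
move=> /cards1P [K HK] x0D DC Hcl; apply/subsetP => y yC.
have x0C : x0 \in C := subsetP DC _ x0D.
have h1 := cls_in_comp yC.
have h2 := cls_in_comp x0C.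
rewrite HK !inE in h1 h2.
have : y \in cls C x0 by rewrite (eqP h2) -(eqP h1) inE yC connect0.
rewrite inE => /andP [_ Hc].
have Hclosed : closed (induced_rel e C) D.
  move=> u v /= /and3P [euv uC vC]; apply/idP/idP => [uD|vD].
    exact: Hcl euv.
  by apply: Hcl vD uC _; rewrite esym.
by rewrite -(closed_connect Hclosed Hc).
Qed.

Lemma nb2 (C : {set T}) x a b : #|nbhd_in e C x| = 2 -> a \in nbhd_in e C x ->
  b \in nbhd_in e C x -> a != b -> nbhd_in e C x = [set a; b].
Proof.
move=> Hc Ha Hb Hab; apply/eqP. rewrite eq_sym. rewrite eqEcard. rewrite Hc. rewrite cards2. rewrite Hab /=.
rewrite andbT; by apply/subsetP => z /set2P [] ->.
Qed.

Definition other (C : {set T}) x p := odflt x [pick y in nbhd_in e C x | y != p].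

Lemma other_spec (C : {set T}) x p : #|nbhd_in e C x| = 2 -> p \in nbhd_in e C x ->
  other C x p \in nbhd_in e C x /\ other C x p != p.
Proof.
move=> Hc Hp; rewrite /other; case: pickP => [y /andP [Hy Hne] | H] //=.
exfalso; have : nbhd_in e C x \subset [set p].
  apply/subsetP => z Hz; rewrite inE; move: (H z); rewrite Hz /=.
  by move/negbT; rewrite negbK.
by move/subset_leq_card; rewrite cards1 Hc.
Qed.

Definition circle (C : {set T}) (n : nat) (f : nat -> T) :=
  [/\ forall i, f i \in C, forall i, f (i + n) = f i,
      forall i k, i < n -> k < n -> f i = f k -> i = k,
      forall i, e (f i) (f i.+1) &
      forall i k, i < n -> k < n -> e (f i) (f k) -> adjn n i k].


Lemma hole_circle (C : {set T}) x0 : hole e C -> x0 \in C ->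
  exists f, [/\ circle C #|C| f, f 0 = x0 &
             forall x, x \in C -> exists2 i, i < #|C| & x = f i].
Proof.
case=> H4 Hconn Hdeg x0C.
set n := #|C|.
have [x1 Hx1] : exists x1, x1 \in nbhd_in e C x0.
  by apply/set0Pn; rewrite -card_gt0 Hdeg.
pose step (q : T * T) := (q.2, other C q.2 q.1).
pose st k := iter k step (x0, x1).
pose f k := (st k).1.
have fS k : f k.+1 = (st k).2 by [].
have fSS k : f k.+2 = other C (f k.+1) (f k) by [].
have inv k : [/\ f k \in C, f k.+1 \in C & e (f k) (f k.+1)].
  elim: k => [|k [Hk Hk1 Hek]].
    by move: Hx1; rewrite inE => /andP [h1 h2]; split.
  have Hp : f k \in nbhd_in e C (f k.+1) by rewrite inE Hk esym.
  have [Ho _] := other_spec (Hdeg _ Hk1) Hp.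
  by move: Ho; rewrite inE -fSS => /andP [h1 h2]; split.
have fC k : f k \in C by case: (inv k).
have fe k : e (f k) (f k.+1) by case: (inv k).
have fne k : f k.+2 != f k.
  have Hp : f k \in nbhd_in e C (f k.+1) by rewrite inE fC esym fe.
  by have [_ Ho] := other_spec (Hdeg _ (fC k.+1)) Hp; rewrite fSS.
have nbS k : nbhd_in e C (f k.+1) = [set f k; f k.+2].
  apply: nb2; first exact: Hdeg.
  - by rewrite inE fC esym fe.
  - by rewrite inE fC fe.
  - by rewrite eq_sym fne.
have Hex : exists j, (j <= n) && [exists i : 'I_j, f i == f j].
  have [/existsP [j Hj]|Hn] := boolP [exists j : 'I_n.+1, [exists i : 'I_j, f i == f j]].
    by exists j; rewrite -ltnS ltn_ord Hj.
  exfalso.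
  pose g (i : 'I_n.+1) := f i.
  have ginj : injective g.
    move=> i k Hik; rewrite /g in Hik; apply/val_inj => /=.
    case: (ltngtP i k) => // Hlt; case/negP: Hn; apply/existsP.
      by exists k; apply/existsP; exists (Ordinal Hlt); rewrite /= -Hik.
    by exists i; apply/existsP; exists (Ordinal Hlt); rewrite /= Hik.
  have Hsub : [set g i | i : 'I_n.+1] \subset C.
    by apply/subsetP => z /imsetP [i _ ->]; exact: fC.
  move/subset_leq_card: Hsub; rewrite card_imset // card_ord.
  by rewrite ltnn.
case: (ex_minnP Hex) => j0 /andP [Hj0n /existsP [i0 /eqP Hi0]] Hmin.
have injj : forall i k, i < j0 -> k < j0 -> f i = f k -> i = k.
  move=> i k hi hk Hik; case: (ltngtP i k) => // Hlt; exfalso.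
    have : j0 <= k.
      apply: Hmin; rewrite (leq_trans (ltnW hk) Hj0n) /=.
      by apply/existsP; exists (Ordinal Hlt); rewrite /= Hik.
    by rewrite leqNgt hk.
  have : j0 <= i.
    apply: Hmin; rewrite (leq_trans (ltnW hi) Hj0n) /=.
    by apply/existsP; exists (Ordinal Hlt); rewrite /= Hik.
  by rewrite leqNgt hi.
have i0lt := ltn_ord i0.
have Hi00 : val i0 = 0.
  case Ei: (val i0) => [//|i1]; exfalso.
  rewrite Ei in Hi0 i0lt.
  have Hj : j0 = j0.-1.+1 by lia.
  set jm := j0.-1 in Hj.
  have Hn : f jm \in nbhd_in e C (f i1.+1).
    by rewrite Hi0 inE fC Hj esym fe.
  rewrite nbS !inE in Hn; case/orP: Hn => /eqP Hn.
    have := injj _ _ (_ : jm < j0) (_ : i1 < j0) Hn; lia.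
  case: (ltnP i1.+2 j0) => Hc.
    have Heq := injj _ _ (_ : jm < j0) Hc Hn.
    have : f i1.+3 = f i1.+1 by rewrite Hi0; congr f; lia.
    by move/eqP; rewrite (negbTE (fne _)).
  have Hjm : j0 = i1.+2 by lia.
  have := fe jm; rewrite -Hj Hn Hjm.
  by rewrite eirr.
rewrite Hi00 in Hi0.
have j0ge3 : 3 <= j0.
  rewrite ltnNge; apply/negP => hle.
  have : (j0 == 1) || (j0 == 2) by lia.
  case/orP => /eqP hj; rewrite hj in Hi0.
    by move: (fe 0); rewrite Hi0 eirr.
  by move: (fne 0); rewrite Hi0 eqxx.
pose D := [set f (val i) | i : 'I_j0].
have inD k : k < j0 -> f k \in D by move=> hk; apply/imsetP; exists (Ordinal hk).
have nb0 : nbhd_in e C (f 0) = [set f 1; f j0.-1].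
  apply: nb2; first exact: Hdeg.
  - by rewrite inE fC fe.
  - have h := fe j0.-1; rewrite prednK in h; last lia.
    by rewrite inE fC Hi0 esym h.
  - apply/eqP => h; have := injj _ _ (_ : 1 < j0) (_ : j0.-1 < j0) h; lia.
have Hcov : C \subset D.
  apply: (connected_cover Hconn (inD 0 _)); first lia.
    by apply/subsetP => z /imsetP [i _ ->]; exact: fC.
  move=> x y /imsetP [[k hk] _ ->] yC /= exy.
  have yN : y \in nbhd_in e C (f k) by rewrite inE yC exy.
  clear exy; case: k hk yN => [|k] hk yN.
    rewrite nb0 !inE in yN; case/orP: yN => /eqP ->; apply: inD; lia.
  rewrite nbS !inE in yN; case/orP: yN => /eqP ->; first by apply: inD; lia.
  case: (ltnP k.+2 j0) => hc; first exact: inD.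
  rewrite (_ : k.+2 = j0); last lia.
  by rewrite -Hi0; apply: inD; lia.
have Hjn : j0 = n.
  apply/eqP; rewrite eqn_leq Hj0n /=.
  apply: (leq_trans (subset_leq_card Hcov)).
  by apply: (leq_trans (leq_imset_card _ _)); rewrite card_ord.
subst j0.
have fn1 : f n.+1 = f 1.
  have h : f n.+1 \in nbhd_in e C (f 0) by rewrite Hi0 inE fC fe.
  rewrite nb0 !inE in h; case/orP: h => /eqP // h.
  by move: (fne n.-1); rewrite (_ : n.-1.+2 = n.+1) ?h ?eqxx //; lia.
have stn : st n = st 0.
  by rewrite [st n]surjective_pairing -fS fn1 /=; congr pair.
have fper i : f (i + n) = f i.
  by rewrite /f /st iterD -/(st n) stn.
exists f; split => //.
  split => //.
  move=> i k hi hk H.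
  have yN : f k \in nbhd_in e C (f i) by rewrite inE fC H.
  case: i hi yN {H} => [|i] hi yN.
    rewrite nb0 !inE in yN; case/orP: yN => /eqP yN.
      have := injj _ _ hk (_ : 1 < n) yN; rewrite /adjn; lia.
    have := injj _ _ hk (_ : n.-1 < n) yN; rewrite /adjn; lia.
  rewrite nbS !inE in yN; case/orP: yN => /eqP yN.
    have := injj _ _ hk (_ : i < n) yN; rewrite /adjn; lia.
  case: (ltnP i.+2 n) => hc.
    have := injj _ _ hk hc yN; rewrite /adjn; lia.
  rewrite (_ : i.+2 = n) in yN; last lia.
  rewrite -Hi0 in yN.
  have := injj _ _ hk (_ : 0 < n) yN; rewrite /adjn; lia.
move=> x /(subsetP Hcov) /imsetP [[k hk] _ ->].
by exists k.
Qed.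

Lemma two_nb (D : {set T}) x y1 y2 :
  (forall y, y \in D -> e x y -> y = y1 \/ y = y2) -> y1 \in D -> y2 \in D ->
  e x y1 -> e x y2 -> y1 != y2 -> #|nbhd_in e D x| = 2.
Proof.
move=> H h1 h2 e1 e2 ne.
suff -> : nbhd_in e D x = [set y1; y2] by rewrite cards2 ne.
apply/setP => y; rewrite inE; apply/andP/set2P => [[yD ey]|[]->]; last 2 first.
- by split.
- by split.
exact: H.
Qed.

Lemma path_hole (p : nat -> T) s m : 2 <= m ->
  (forall t u, t <= m -> u <= m -> p t = p u -> t = u) ->
  (forall t u, t <= m -> u <= m -> e (p t) (p u) = (u == t.+1) || (t == u.+1)) ->
  (forall t, t <= m -> s != p t) ->
  (forall t, t <= m -> e s (p t) = (t == 0) || (t == m)) ->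
  hole e (s |: [set p (val t) | t : 'I_m.+1]) /\
  #|s |: [set p (val t) | t : 'I_m.+1]| = m.+2.
Proof.
move=> hm Pinj Padj Pns Ps.
set A := [set p (val t) | t : 'I_m.+1].
set D := s |: A.
have inA t : t <= m -> p t \in A.
  by move=> ht; apply/imsetP; exists (Ordinal (ht : t < m.+1)).
have inD t : t <= m -> p t \in D by move=> ht; apply/setU1r/inA.
have sD : s \in D by apply: setU11.
have Dcase y : y \in D -> y = s \/ exists2 t, t <= m & y = p t.
  case/setU1P => [->|/imsetP [[t ht] _ ->]]; [by left | right; by exists t].
have sA : s \notin A.
  apply/imsetP => [[[t ht] _ /= h]]; by move: (Pns t ht); rewrite h eqxx.
have Hcard : #|D| = m.+2.
  rewrite cardsU1 sA card_imset ?card_ord //.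
  move=> t u /= h; apply/val_inj; exact: Pinj (ltn_ord t) (ltn_ord u) h.
split => //; split; first by rewrite Hcard; lia.
- have conn t : t <= m -> connect (induced_rel e D) s (p t).
    elim: t => [|t IH] ht.
      apply: connect1; apply/and3P; split; [by rewrite Ps // eqxx | exact: sD | exact: inD].
    apply: connect_trans (IH (ltnW ht)) (connect1 _).
    apply/and3P; split; [by rewrite Padj ?(ltnW ht) // eqxx | exact: inD (ltnW ht) | exact: inD].
  have CS := sym_connect_sym (induced_sym D).
  have clsE x : x \in D -> cls D x = cls D s.
    move=> xD.
    have Hsx : connect (induced_rel e D) s x.
      by case: (Dcase _ xD) => [->|[t ht ->]]; [exact: connect0 | exact: conn].
    apply/setP => y; rewrite /cls !inE; congr andb; apply/idP/idP => H.
      exact: connect_trans Hsx H.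
    by rewrite CS in Hsx; exact: connect_trans Hsx H.
  rewrite /connected_set (_ : components e D = [set cls D s]) ?cards1 //.
  apply/setP => K; rewrite inE; apply/imsetP/eqP => [[x xD ->]|->].
    exact: clsE.
  by exists s.
- move=> x xD; case: (Dcase _ xD) => [->|[t ht ->]].
    apply: (two_nb (y1 := p 0) (y2 := p m)).
    + move=> y yD ey; case: (Dcase _ yD) => [yE|[u hu yE]]; subst y.
        by rewrite eirr in ey.
      by rewrite Ps // in ey; case/orP: ey => /eqP ->; [left|right].
    + by apply: inD; lia.
    + by apply: inD; lia.
    + by rewrite Ps // eqxx.
    + by rewrite Ps // eqxx orbT.
    + by apply/eqP => h; have := Pinj _ _ (leq0n m) (leqnn m) h; lia.
  case: (posnP t) => [t0|tpos].
    subst t; apply: (two_nb (y1 := s) (y2 := p 1)).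
    + move=> y yD ey; case: (Dcase _ yD) => [yE|[u hu yE]]; subst y; first by left.
      rewrite Padj // in ey; case/orP: ey => /eqP h; [by right; rewrite h | lia].
    + exact: sD.
    + by apply: inD; lia.
    + by rewrite esym Ps // eqxx.
    + by rewrite Padj //; lia.
    + by apply: Pns; lia.
  have [tm|tlt] : t = m \/ t < m by lia.
    subst t; apply: (two_nb (y1 := s) (y2 := p m.-1)).
    + move=> y yD ey; case: (Dcase _ yD) => [yE|[u hu yE]]; subst y; first by left.
      rewrite Padj // in ey; case/orP: ey => /eqP h; first lia.
      by right; rewrite h.
    + exact: sD.
    + by apply: inD; lia.
    + by rewrite esym Ps // eqxx orbT.
    + by rewrite Padj //; lia.
    + by apply: Pns; lia.
  apply: (two_nb (y1 := p t.-1) (y2 := p t.+1)).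
  + move=> y yD ey; case: (Dcase _ yD) => [yE|[u hu yE]]; subst y.
      rewrite esym Ps // in ey; lia.
    rewrite Padj // in ey; case/orP: ey => /eqP h; first by right; rewrite h.
    by left; rewrite h.
  + by apply: inD; lia.
  + by apply: inD; lia.
  + by rewrite Padj //; lia.
  + by rewrite Padj //; lia.
  + by apply/eqP => h; have := Pinj _ _ _ _ h; lia.
Qed.

Lemma arc_hole (C : {set T}) n f s i m : circle C n f -> s \notin C -> i < n ->
  2 <= m -> m <= n - 2 ->
  e s (f i) -> e s (f (i + m)) -> (forall t, 0 < t < m -> ~~ e s (f (i + t))) ->
  hole e (s |: [set f (i + val t) | t : 'I_m.+1]) /\
  #|s |: [set f (i + val t) | t : 'I_m.+1]| = m.+2.
Proof.
case=> fC fper finj fe fadj sC hi hm hmn e0 em eint.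
pose r x := if x < n then x else x - n.
have rspec x : (x < n /\ r x = x) \/ (n <= x /\ r x = x - n).
  rewrite /r; case: ifP => h; [left | right]; split => //; lia.
have fr x : f x = f (r x).
  rewrite /r; case: ifP => // h.
  by rewrite -{1}(subnK (_ : n <= x)) ?fper //; lia.
have hr x : x < n + n -> r x < n by move=> hx; case: (rspec x); lia.
apply: (path_hole (p := fun t => f (i + t))) => //.
- move=> t u ht hu /= h; rewrite (fr (i + t)) (fr (i + u)) in h.
  have h1 : i + t < n + n by lia.
  have h2 : i + u < n + n by lia.
  have := finj _ _ (hr (i + t) h1) (hr (i + u) h2) h.
  by case: (rspec (i + t)); case: (rspec (i + u)); lia.
- move=> t u ht hu /=; apply/idP/idP => [h|].
    rewrite (fr (i + t)) (fr (i + u)) in h.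
    have h1 : i + t < n + n by lia.
    have h2 : i + u < n + n by lia.
    have := fadj _ _ (hr (i + t) h1) (hr (i + u) h2) h.
    rewrite /adjn; case: (rspec (i + t)); case: (rspec (i + u)); try lia.
  case/orP => /eqP ->; first by rewrite addnS fe.
  by rewrite addnS esym fe.
- move=> t ht; apply/eqP => h; move: sC; by rewrite h fC.
- move=> t ht; apply/idP/idP => [h|].
    apply/negPn/negP => H; have := eint t; rewrite h /= => H'.
    suff : false by []. apply: H'; lia.
  by case/orP => /eqP ->; rewrite ?addn0.
Qed.

Lemma comp2 (A : {set T}) u1 v1 u2 v2 :
  A = [set u1; v1] :|: [set u2; v2] -> e u1 v1 -> e u2 v2 ->
  (forall x y, x \in [set u1; v1] -> y \in [set u2; v2] -> ~~ e x y) ->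
  u1 \notin [set u2; v2] ->
  #|components e A| = 2 /\ (forall K, K \in components e A -> #|K| = 2).
Proof.
move=> HA e1 e2 Hx u1n.
have n1 : u1 != v1 by apply/eqP => h; rewrite h eirr in e1.
have n2 : u2 != v2 by apply/eqP => h; rewrite h eirr in e2.
have closedK (K L : {set T}) : A = K :|: L ->
    (forall x y, x \in K -> y \in L -> ~~ e x y) -> closed (induced_rel e A) K.
  move=> HAKL HKL x y /= /and3P [exy xA yA]; apply/idP/idP => [xK|yK].
    move: yA; rewrite HAKL inE => /orP [//|yL].
    by rewrite (negbTE (HKL _ _ xK yL)) in exy.
  move: xA; rewrite HAKL inE => /orP [//|xL].
  by rewrite esym (negbTE (HKL _ _ yK xL)) in exy.
have clsK (K L : {set T}) u v : A = K :|: L -> K = [set u; v] -> e u v ->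
    (forall x y, x \in K -> y \in L -> ~~ e x y) ->
    forall x, x \in K -> cls A x = K.
  move=> HAKL HK euv HKL x xK; apply/setP => y; rewrite /cls inE.
  apply/andP/idP => [[yA cxy]|yK].
    by rewrite -(closed_connect (closedK _ _ HAKL HKL) cxy).
  have KA z : z \in K -> z \in A by move=> zK; rewrite HAKL inE zK.
  split; first exact: KA.
  have uA : u \in A by apply: KA; rewrite HK set21.
  have vA : v \in A by apply: KA; rewrite HK set22.
  rewrite HK in xK yK.
  case/set2P: xK => ->; case/set2P: yK => ->; try exact: connect0.
    apply: connect1; apply/and3P; split => //.
  by apply: connect1; apply/and3P; split => //; rewrite esym.
set K1 := [set u1; v1]; set K2 := [set u2; v2].
have H1 := clsK K1 K2 u1 v1 HA erefl e1 Hx.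
have H2 := clsK K2 K1 u2 v2 (etrans HA (setUC _ _)) erefl e2
   (fun x y hx hy => (negbT (etrans (esym _ _) (negbTE (Hx _ _ hy hx))))).
have Hc : components e A = [set K1; K2].
  apply/setP => K; apply/imsetP/set2P => [[x xA ->]|[]->].
  - rewrite HA inE in xA; case/orP: xA => xK; [left; exact: H1 | right; exact: H2].
  - exists u1; [by rewrite HA inE set21 | by symmetry; apply: H1; rewrite set21].
  - exists u2; [by rewrite HA inE set21 orbT | by symmetry; apply: H2; rewrite set21].
rewrite Hc; split.
  rewrite cards2 (_ : K1 != K2) //; apply/eqP => h.
  have : u1 \in K2 by rewrite -h /K1 set21.
  by rewrite (negbTE u1n).
move=> K /set2P [] ->; by rewrite cards2 ?n1 ?n2.
Qed.

Lemma odd_split n m1 m2 : ~~ odd n -> m1 + m2 = n.+3 -> ~~ odd m1 || ~~ odd m2.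
Proof.
move=> hn h; move: (congr1 odd h); rewrite oddD /= (negbTE hn) /=.
by case: (odd m1); case: (odd m2).
Qed.

End Aux.


Ltac slia := repeat match goal with
 | H : is_true (leq _ _) |- _ => revert H
 | H : is_true (andb (leq _ _) (leq _ _)) |- _ => revert H
 | H : @eq nat _ _ |- _ => revert H
 | H : ~ (@eq nat _ _) |- _ => revert H
 | H : adjn _ _ _ |- _ => revert H
 | H : (is_true (andb (leq _ _) (leq _ _))) \/ (is_true (andb (leq _ _) (leq _ _))) |- _ => revert H
 end; repeat match goal with H : _ |- _ => clear H end; intros; lia.

Theorem lemma16 (T : finType) (e : rel T) (VH S : {set T}) (u1 u2 u3 : T) :
  simple_graph e ->
  lucky_tracker e VH u1 u2 u3 ->
  full_star_cutset e VH S ->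
  (forall C, u_hole e VH u1 u2 u3 C ->
     exists2 B, B \in components e (VH :\: S) & C \subset B :|: S)
  \/
  (exists s1 s2 B1 B2,
     [/\ [/\ s1 \in S, s2 \in S, s1 != s2 & ~~ e s1 s2],
         [/\ B1 \in components e (VH :\: S), B2 \in components e (VH :\: S) & B1 != B2] &
         [/\ [set s1; s2] \subset nbhd_of_set e VH B1 &
             [set s1; s2] \subset nbhd_of_set e VH B2]]).
Proof.
move=> [esym eirr] _ [[SVH _ Hcard] [s sS HS]].
have sVH : s \in VH := subsetP SVH s sS.
have inS x : (x \in S) = (x == s) || (x \in VH) && e s x by rewrite HS !inE.
case: (classic (exists s1 s2 B1 B2,
     [/\ [/\ s1 \in S, s2 \in S, s1 != s2 & ~~ e s1 s2],
         [/\ B1 \in components e (VH :\: S), B2 \in components e (VH :\: S) & B1 != B2] &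
         [/\ [set s1; s2] \subset nbhd_of_set e VH B1 &
             [set s1; s2] \subset nbhd_of_set e VH B2]])) => [H|Hno]; [by right|left].
move=> C [Hclean [[[CVH Hhole] Heven] Hmin] _].
have [B0 B0in] : exists B0, B0 \in components e (VH :\: S).
  by apply/set0Pn; rewrite -card_gt0; lia.
apply: NNPP => Hnot.
have Hnot' B : B \in components e (VH :\: S) -> ~~ (C \subset B :|: S).
  by move=> HB; apply/negP => Hs; apply: Hnot; exists B.
have [x0 x0C x0n] := subsetPn (Hnot' _ B0in).
have x0S : x0 \notin S by move: x0n; rewrite inE negb_or => /andP [].
have [f [[fC fper finj fe fadj] f0 fsurj]] := hole_circle esym eirr Hhole x0C.
set n := #|C| in fper finj fadj fsurj Heven Hmin.
have fVH i : f i \in VH := subsetP CVH _ (fC i).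
have fn : f n = f 0 by rewrite -(add0n n) fper.
have f0S : f 0 \notin S by rewrite f0.
set R := induced_rel e (VH :\: S).
have CS := sym_connect_sym (induced_sym esym (VH :\: S)).
have VS i : f i \notin S -> f i \in VH :\: S by move=> h; rewrite inE h fVH.
pose B1 := cls e (VH :\: S) (f 0).
have B1in : B1 \in components e (VH :\: S) by apply: cls_in_comp; exact: VS.
have [x1 x1C x1n] := subsetPn (Hnot' _ B1in).
have [j hj fj] := fsurj _ x1C; subst x1.
have fjS : f j \notin S by move: x1n; rewrite inE negb_or => /andP [].
have nc : ~~ connect R (f 0) (f j).
  have fjVS := VS _ fjS.
  have : f j \notin B1 by move: x1n; rewrite inE negb_or => /andP [].
  by rewrite /B1 /cls in_set fjVS.
clear x1n x0n.
have run i k : i <= k -> (forall t, i <= t <= k -> f t \notin S) -> connect R (f i) (f k).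
  elim: k => [|k IH] hik H.
    have -> : i = 0 by clear x0S f0S fjS; slia.
    exact: connect0.
  case: (ltnP k i) => hki.
    by rewrite (_ : i = k.+1) ?connect0 //; slia.
  apply: connect_trans (IH hki _) (connect1 _).
    by move=> t ht; apply: H; slia.
  apply/and3P; split; [exact: fe | apply: VS | apply: VS]; apply: H; slia.
have j0 : 0 < j by case: (posnP j) nc => // ->; rewrite connect0.
have exa : exists i, (0 < i < j) && (f i \in S).
  apply: NNPP => H; case/negP: nc; apply: run => // t ht.
  have [->|tp] := posnP t; first by [].
  case: (ltnP t j) => htj; last by rewrite (_ : t = j) //; slia.
  apply/negP => tS; apply: H; exists t; by rewrite tS tp htj.
case: (ex_minnP exa) => a /andP [/andP [ha1 ha2] haS] amin.
have exa' : exists i, (i < j) && (f i \in S) by exists a; rewrite ha2 haS.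
have uba' : forall i, (i < j) && (f i \in S) -> i <= j.
  by move=> i /andP [h _]; exact: ltnW.
case: (ex_maxnP exa' uba') => a' /andP [ha' ha'S] a'max.
have aa' : a <= a' by apply: a'max; rewrite ha2 haS.
have exb : exists i, (j < i < n) && (f i \in S).
  apply: NNPP => H; case/negP: nc.
  have : connect R (f j) (f n).
    apply: run; first slia.
    move=> t /andP [h1 h2]; case: (ltnP j t) => h3; last by rewrite (_ : t = j) //; slia.
    case: (ltnP t n) => h4; last by rewrite (_ : t = n) ?fn //; slia.
    apply/negP => tS; apply: H; exists t; by rewrite tS h3 h4.
  by rewrite fn CS.
case: (ex_minnP exb) => b' /andP [/andP [hb'1 hb'2] hb'S] b'min.
have ubb : forall i, (j < i < n) && (f i \in S) -> i <= n.
  by move=> i /andP [/andP [_ h] _]; exact: ltnW.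
case: (ex_maxnP exb ubb) => b /andP [/andP [hb1 hb2] hbS] bmax.
have bb' : b' <= b by apply: bmax; rewrite hb'1 hb'2 hb'S.
have Sloc i : i < n -> f i \in S -> (a <= i <= a') \/ (b' <= i <= b).
  move=> hi iS.
  have [i0|ip] := posnP i; first by subst i; rewrite iS in f0S.
  case: (ltngtP i j) => hij.
  - left; rewrite (amin i) ?(a'max i) ?hij ?iS ?ip //.
  - right; rewrite (b'min i) ?(bmax i) ?hij ?iS ?hi //.
  - by subst i; rewrite iS in fjS.
have sC : s \notin C.
  apply/negP => sC; have [k hk sk] := fsurj _ sC.
  have aux i : i < n -> f i \in S -> i = k \/ adjn n k i.
    move=> hi; rewrite inS fVH /= => /orP [/eqP h | h].
      by left; apply: finj => //; rewrite h sk.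
    by right; apply: fadj => //; rewrite -sk.
  have := aux a (ltn_trans ha2 hj) haS; have := aux b hb2 hbS.
  have : j <> k by move=> h; subst k; move: fjS; rewrite -sk sS.
  have : k <> 0 by move=> h; subst k; move: f0S; rewrite -sk sS.
  rewrite /adjn; slia.
have eS i : (f i \in S) = e s (f i).
  rewrite inS fVH /=; have -> // : (f i == s) = false.
  by apply/negbTE; apply/eqP => h; move: sC; rewrite -h fC.
have nadj i k : i < n -> k < n -> ~ adjn n i k -> ~~ e (f i) (f k).
  by move=> hi hk H; apply/negP => h; apply: H; exact: fadj.
have ninj i k : i < n -> k < n -> i <> k -> f i != f k.
  by move=> hi hk H; apply/eqP => h; apply: H; exact: finj.
have [nmaj nn22] := Hclean s sVH.
have inN i : f i \in S -> f i \in nbhd_in e C s by move=> h; rewrite inE fC -eS.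
have Ha' : a' <= a.+1.
  rewrite leqNgt; apply/negP => h; apply: nmaj; split => //.
  exists (f a), (f a'), (f b'); split.
  - by split; apply: inN.
  - by split; apply: ninj; slia.
  - by split; apply: nadj; rewrite /adjn; slia.
have Hb' : b <= b'.+1.
  rewrite leqNgt; apply/negP => h; apply: nmaj; split => //.
  exists (f a'), (f b'), (f b); split.
  - by split; apply: inN.
  - by split; apply: ninj; slia.
  - by split; apply: nadj; rewrite /adjn; slia.
pose B2 := cls e (VH :\: S) (f j).
have B2in : B2 \in components e (VH :\: S) by apply: cls_in_comp; exact: VS.
have B12 : B1 != B2.
  apply/eqP => h; have : f j \in B2 by rewrite /B2 /cls inE VS // connect0.
  by rewrite -h /B1 /cls inE (negbTE nc) andbF.
have clsS x : cls e (VH :\: S) x \subset VH :\: S.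
  by apply/subsetP => y; rewrite inE => /andP [].
have nbB x y (B : {set T}) : x \in S -> y \in B -> B \subset VH :\: S -> e x y ->
    x \in nbhd_of_set e VH B.
  move=> xS yB BS exy; rewrite inE; apply/andP; split.
    rewrite inE (subsetP SVH _ xS) andbT; apply/negP => xB.
    by move: (subsetP BS _ xB); rewrite inE xS.
  by apply/existsP; exists y; rewrite yB exy.
have notS_a t : t < a -> f t \notin S.
  move=> ht; have [->|tp] := posnP t; first by [].
  by apply/negP => tS; have := amin t; rewrite tp tS (ltn_trans ht ha2) /=; slia.
have notS_b t : b < t <= n -> f t \notin S.
  move=> /andP [h1 h2]; case: (ltnP t n) => h3; last by rewrite (_ : t = n) ?fn //; slia.
  have hjt : j < t by slia.
  by apply/negP => tS; have := bmax t; rewrite tS h3 hjt /=; slia.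
have notS_mid t : a' < t < b' -> f t \notin S.
  move=> ht; apply/negP => tS; have := Sloc t _ tS; slia.
have B1L : f a.-1 \in B1.
  rewrite /B1 /cls inE VS ?notS_a //; last slia.
  by apply: run; [slia | move=> t ht; apply: notS_a; slia].
have B1R : f b.+1 \in B1.
  rewrite /B1 /cls inE VS ?notS_b //; last slia.
  have : connect R (f b.+1) (f n) by apply: run; [slia | move=> t ht; apply: notS_b; slia].
  by rewrite fn CS.
have B2L : f a'.+1 \in B2.
  rewrite /B2 /cls inE VS ?notS_mid //; last slia.
  have : connect R (f a'.+1) (f j) by apply: run; [slia | move=> t ht; apply: notS_mid; slia].
  by rewrite CS.
have B2R : f b'.-1 \in B2.
  rewrite /B2 /cls inE VS ?notS_mid //; last slia.
  by apply: run; [slia | move=> t ht; apply: notS_mid; slia].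
have ea : e (f a) (f a.-1) by rewrite esym -{2}(prednK ha1) fe.
have eb' : e (f b') (f b'.-1).
  by rewrite esym -{2}(prednK (_ : 0 < b')) ?fe //; slia.
have arc_contra i1 m1 i2 m2 :
    i1 < n -> 2 <= m1 -> m1 <= n - 2 -> e s (f i1) -> e s (f (i1 + m1)) ->
    (forall t, 0 < t < m1 -> ~~ e s (f (i1 + t))) ->
    i2 < n -> 2 <= m2 -> m2 <= n - 2 -> e s (f i2) -> e s (f (i2 + m2)) ->
    (forall t, 0 < t < m2 -> ~~ e s (f (i2 + t))) ->
    m1 + m2 = n.-1 -> False.
  move=> h1 h2 h3 h4 h5 h6 k1 k2 k3 k4 k5 k6 hsum.
  have circ : circle e C n f by split.
  have [H1 c1] := arc_hole esym eirr circ sC h1 h2 h3 h4 h5 h6.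
  have [H2 c2] := arc_hole esym eirr circ sC k1 k2 k3 k4 k5 k6.
  have hsub i m : s |: [set f (i + val t) | t : 'I_m.+1] \subset VH.
    by apply/subsetP => y /setU1P [->|/imsetP [t _ ->]].
  have : ~~ odd m1.+2 || ~~ odd m2.+2.
    by apply: (odd_split Heven); slia.
  case/orP => hev.
    have := Hmin _ (conj (conj (hsub i1 m1) H1) (eq_ind_r (fun x => ~~ odd x) hev c1)).
    rewrite c1; slia.
  have := Hmin _ (conj (conj (hsub i2 m2) H2) (eq_ind_r (fun x => ~~ odd x) hev c2)).
  rewrite c2; slia.
have eSb : e s (f (b + (n - b + a))).
  by rewrite (_ : b + (n - b + a) = a + n) ?fper -?eS //; slia.
have intb t : 0 < t < n - b + a -> ~~ e s (f (b + t)).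
  move=> ht; rewrite -eS; case: (ltnP (b + t) n) => h.
    by apply: notS_b; slia.
  rewrite (_ : b + t = (b + t - n) + n) ?fper; last slia.
  by apply: notS_a; slia.
have Ha : a' = a \/ a' = a.+1 by slia.
have Hb : b' = b \/ b'.+1 = b by slia.
have ebS : e s (f b) by rewrite -eS.
have eaS : e s (f a) by rewrite -eS.
case: Ha => a'E.
  case: Hb => b'E.
    subst a' b'; apply: Hno; exists (f a), (f b), B1, B2; split.
    + split => //; [apply: ninj | apply: nadj; rewrite /adjn]; slia.
    + by split.
    split; apply/subsetP => y /set2P [] ->.
    + exact: nbB haS B1L (clsS _) ea.
    + exact: nbB hbS B1R (clsS _) (fe b).
    + exact: nbB haS B2L (clsS _) (fe a).
    exact: nbB hbS B2R (clsS _) eb'.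
  subst a'.
  have e2 : e s (f (a + (b' - a))).
    by rewrite (_ : a + (b' - a) = b') -?eS //; slia.
  have i1 : forall t, 0 < t < b' - a -> ~~ e s (f (a + t)).
    by move=> t ht; rewrite -eS; apply: notS_mid; slia.
  by apply: (arc_contra a (b' - a) b (n - b + a) _ _ _ eaS e2 i1 _ _ _ ebS eSb intb); slia.
case: Hb => b'E.
  subst b'.
  have ea'S : e s (f a') by rewrite -eS.
  have e2 : e s (f (a' + (b - a'))).
    by rewrite (_ : a' + (b - a') = b) -?eS //; slia.
  have i1 : forall t, 0 < t < b - a' -> ~~ e s (f (a' + t)).
    by move=> t ht; rewrite -eS; apply: notS_mid; slia.
  by apply: (arc_contra a' (b - a') b (n - b + a) _ _ _ ea'S e2 i1 _ _ _ ebS eSb intb); slia.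
have HN : nbhd_in e C s = [set f a; f a'] :|: [set f b'; f b].
  apply/setP => y; rewrite !inE; apply/andP/idP => [[yC ey]|].
    have [i hi yi] := fsurj _ yC; subst y.
    rewrite -eS in ey; have := Sloc i hi ey.
    move=> H; have : i = a \/ i = a' \/ i = b' \/ i = b by slia.
    by case=> [->|[->|[->|->]]]; rewrite ?eqxx ?orbT.
  by case/orP => [/orP [] | /orP []] /eqP ->; rewrite fC -eS.
have e1 : e (f a) (f a') by rewrite a'E fe.
have e2 : e (f b') (f b) by rewrite -b'E fe.
have Hx : forall x y, x \in [set f a; f a'] -> y \in [set f b'; f b] -> ~~ e x y.
  by move=> x y /set2P [] -> /set2P [] ->; apply: nadj; rewrite /adjn; slia.
have Hu : f a \notin [set f b'; f b].
  by rewrite !inE negb_or; apply/andP; split; apply: ninj; slia.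
have [h1 h2] := comp2 esym eirr HN e1 e2 Hx Hu.
apply: nn22; split => //.
by apply/set0Pn; exists (f a); apply: inN.
Qed.
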